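(* $\Pi_2\text{-}\mathrm{CSP}(\mathbb{N};\leq) \subseteq \Pi_2\text{-}\mathrm{CSP}(\mathbb{Q};\leq)$.
   Context: Structures over a signature with one binary relation symbol, interpreted as the usual order $\leq$ on $\mathbb{N}$ and $\mathbb{Q}$ respectively. $\Pi_2\text{-}\mathrm{CSP}(\mathcal{A})$ is the set of sentences of the form $\forall\bar x\exists\bar y\,P$, with $P$ a conjunction of atoms (relational atoms and equalities), true in $\mathcal{A}$. *)

(* Defs.v *)
From HB Require Import structures.
From mathcomp Require Import all_boot all_order all_algebra.
Set Implicit Arguments. Unset Strict Implicit. Unset Printing Implicit Defensive.
Import Order.TTheory GRing.Theory Num.Theory.

(* Primitive positive Pi_2 sentences over the signature {<=}:
   forall x_0..x_{n-1}, exists y_0..y_{m-1}, conjunction of atoms. *)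
Inductive atom (n m : nat) : Type :=
  | ALe : 'I_n + 'I_m -> 'I_n + 'I_m -> atom n m
  | AEq : 'I_n + 'I_m -> 'I_n + 'I_m -> atom n m.

Record pi2_sentence : Type := Pi2 {
  nuniv : nat;
  nexist : nat;
  body : seq (atom nuniv nexist)
}.

Definition val_var (D : Type) (n m : nat) (a : 'I_n -> D) (b : 'I_m -> D)
  (v : 'I_n + 'I_m) : D :=
  match v with inl i => a i | inr j => b j end.

Definition sat_atom (D : Type) (R : D -> D -> Prop) (n m : nat)
  (a : 'I_n -> D) (b : 'I_m -> D) (t : atom n m) : Prop :=
  match t with
  | ALe u v => R (val_var a b u) (val_var a b v)
  | AEq u v => val_var a b u = val_var a b v
  end.

Definition holds_in (D : Type) (R : D -> D -> Prop) (phi : pi2_sentence) : Prop :=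
  forall a : 'I_(nuniv phi) -> D, exists b : 'I_(nexist phi) -> D,
    foldr (fun t P => sat_atom R a b t /\ P) True (body phi).

Definition Pi2CSP (D : Type) (R : D -> D -> Prop) : pi2_sentence -> Prop :=
  fun phi => holds_in R phi.

Definition leN : nat -> nat -> Prop := fun x y => (x <= y)%N.
Definition leQ : rat -> rat -> Prop := fun x y => (x <= y)%R.

(* Main.v *)
Require Import Defs.
From mathcomp Require Import all_boot all_order all_algebra.
Import Order.TTheory GRing.Theory Num.Theory.

Section Aux.
Variables (n : nat) (a : 'I_n -> rat).

Definition rk (i : 'I_n) : nat := #|[pred j | (a j < a i)%R]|.

Lemma rk_le i j : (rk i <= rk j)%N = (a i <= a j)%R.
Proof.
case: (leP (a i) (a j)) => h.
  apply: subset_leq_card; apply/subsetP => k; rewrite !inE => hk.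
  exact: lt_le_trans hk h.
apply/negbTE; rewrite -ltnNge; apply: proper_card; apply/properP; split.
  apply/subsetP => k; rewrite !inE => hk; exact: lt_trans hk h.
by exists j; rewrite !inE ?ltxx.
Qed.

Definition lo : rat := \big[Order.min/0%R]_j a j.

Lemma lo_le i : (lo <= a i)%R.
Proof. exact: bigmin_le_cond. Qed.

Definition g (k : nat) : rat := \big[Order.max/lo]_(j | (rk j <= k)%N) a j.

Lemma g_mono k k' : (k <= k')%N -> (g k <= g k')%R.
Proof.
move=> hk; apply: bigmax_le; first exact: bigmax_ge_id.
move=> j hj; apply: le_bigmax_cond; exact: leq_trans hj hk.
Qed.

Lemma g_rk i : g (rk i) = a i.
Proof.
apply: le_anti; apply/andP; split.
  apply: bigmax_le; first exact: lo_le.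
  by move=> j; rewrite rk_le.
exact: le_bigmax_cond.
Qed.
End Aux.

Lemma transfer n m (a : 'I_n -> rat) (b' : 'I_m -> nat) (s : seq (atom n m)) :
  foldr (fun t P => sat_atom leN (@rk n a) b' t /\ P) True s ->
  foldr (fun t P => sat_atom leQ a (fun j => @g n a (b' j)) t /\ P) True s.
Proof.
have Hv : forall u, val_var a (fun j => @g n a (b' j)) u = @g n a (val_var (@rk n a) b' u).
  by case=> [i|j] //=; rewrite g_rk.
elim: s => [|t s IH] //= [Ht Hs]; split; last exact: IH.
case: t Ht => [u v|u v] /=.
  by rewrite /leN /leQ !Hv => h; apply: g_mono.
by rewrite !Hv => ->.
Qed.

Theorem mainTheorem6 :
  forall phi : pi2_sentence, Pi2CSP leN phi -> Pi2CSP leQ phi.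
Proof.
move=> [n m body] H a /=.
have [b' Hb] := H (@rk n a).
exists (fun j => @g n a (b' j)).
exact: transfer.
Qed.
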